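(* Let $\Gamma$, $\Delta$, $\Sigma$ be finite multisets of formulas not containing $\ast$. If the multi-succedent sequent $\Gamma, \Delta \Rightarrow \Sigma$ is derivable in classical propositional logic (i.e. the conjunction of $\Gamma,\Delta$ classically entails the disjunction of $\Sigma$), then \[ \Pi_V, \Gamma, \lnot_\ast\lnot\Delta, \lnot_\ast\Sigma \vdash_i \ast \] for every set $V$ of propositional variables containing \[ (\mathcal{V}^-(\Gamma,\Delta) \cup \mathcal{V}^+(\Sigma)) \cap (\mathcal{V}^+_{ns}(\Gamma) \cup \mathcal{V}^+(\Delta) \cup \mathcal{V}^-(\Sigma)). \] Here $\lnot_\ast\lnot\Delta$ denotes the multiset $\lnot_\ast\lnot D_1,\ldots,\lnot_\ast\lnot D_n$ if $\Delta = D_1,\ldots,D_n$, and $\lnot_\ast\Sigma$ denotes $\lnot_\ast S_1,\ldots,\lnot_\ast S_m$ if $\Sigma=S_1,\ldots,S_m$.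
   Context: Formulas are built from propositional variables and $\bot$ using $\land$, $\lor$, $\to$; $\lnot A$ abbreviates $A \to \bot$. $\ast$ is a distinguished propositional letter (placeholder), and $\lnot_\ast A$ abbreviates $A \to \ast$. For a set $V$ of propositional variables, $\Pi_V = \{ p \lor \lnot p \mid p \in V\}$. $\vdash_i$ denotes derivability in intuitionistic propositional logic (e.g. in the sequent calculus G3ip). The sets $\mathcal{V}^+(A)$, $\mathcal{V}^-(A)$ of variables occurring positively, negatively in $A$ are defined simultaneously by: $\mathcal{V}^+(p)=\{p\}$, $\mathcal{V}^+(\bot)=\emptyset$, $\mathcal{V}^+(A\land B)=\mathcal{V}^+(A\lor B)=\mathcal{V}^+(A)\cup\mathcal{V}^+(B)$, $\mathcal{V}^+(A\to B)=\mathcal{V}^-(A)\cup\mathcal{V}^+(B)$; $\mathcal{V}^-(p)=\mathcal{V}^-(\bot)=\emptyset$, $\mathcal{V}^-(A\land B)=\mathcal{V}^-(A\lor B)=\mathcal{V}^-(A)\cup\mathcal{V}^-(B)$, $\mathcal{V}^-(A\to B)=\mathcal{V}^+(A)\cup\mathcal{V}^-(B)$. The set $\mathcal{V}^+_{ns}(A)$ of variables occurring non-strictly positively is defined by $\mathcal{V}^+_{ns}(p)=\mathcal{V}^+_{ns}(\bot)=\emptyset$, $\mathcal{V}^+_{ns}(A\land B)=\mathcal{V}^+_{ns}(A\lor B)=\mathcal{V}^+_{ns}(A)\cup\mathcal{V}^+_{ns}(B)$, $\mathcal{V}^+_{ns}(A\to B)=\mathcal{V}^-(A)\cup\mathcal{V}^+_{ns}(B)$.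 For a finite multiset $\Gamma$, $\mathcal{V}^+(\Gamma)=\bigcup_{A\in\Gamma}\mathcal{V}^+(A)$, and similarly for $\mathcal{V}^-$ and $\mathcal{V}^+_{ns}$; $\mathcal{V}^-(\Gamma,\Delta)$ is $\mathcal{V}^-$ of the multiset union. *)

(* Defs.v *)
From Stdlib Require Import List Bool.
Import ListNotations.

Inductive form : Type :=
| Var : nat -> form
| Bot : form
| And : form -> form -> form
| Or  : form -> form -> form
| Imp : form -> form -> form.

Definition star_var : nat := 0.
Definition star : form := Var star_var.

Definition Neg (A : form) : form := Imp A Bot.
Definition NegS (A : form) : form := Imp A star.

Definition Pi (V : list nat) : list form :=
  map (fun p => Or (Var p) (Neg (Var p))) V.

Fixpoint vars (A : form) : list nat :=
  match A with
  | Var p => [p]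
  | Bot => []
  | And B C | Or B C | Imp B C => vars B ++ vars C
  end.

Fixpoint vpos (A : form) : list nat :=
  match A with
  | Var p => [p]
  | Bot => []
  | And B C | Or B C => vpos B ++ vpos C
  | Imp B C => vneg B ++ vpos C
  end
with vneg (A : form) : list nat :=
  match A with
  | Var _ => []
  | Bot => []
  | And B C | Or B C => vneg B ++ vneg C
  | Imp B C => vpos B ++ vneg C
  end.

Fixpoint vnsp (A : form) : list nat :=
  match A with
  | Var _ => []
  | Bot => []
  | And B C | Or B C => vnsp B ++ vnsp C
  | Imp B C => vneg B ++ vnsp C
  end.

Definition vposL (G : list form) : list nat := flat_map vpos G.
Definition vnegL (G : list form) : list nat := flat_map vneg G.
Definition vnspL (G : list form) : list nat := flat_map vnsp G.

(* Intuitionistic propositional derivability (natural deduction,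
   equivalent to G3ip); contexts are finite multisets represented by lists. *)
Inductive ider : list form -> form -> Prop :=
| ider_ax   : forall G A, In A G -> ider G A
| ider_botE : forall G A, ider G Bot -> ider G A
| ider_andI : forall G A B, ider G A -> ider G B -> ider G (And A B)
| ider_andE1 : forall G A B, ider G (And A B) -> ider G A
| ider_andE2 : forall G A B, ider G (And A B) -> ider G B
| ider_orI1 : forall G A B, ider G A -> ider G (Or A B)
| ider_orI2 : forall G A B, ider G B -> ider G (Or A B)
| ider_orE  : forall G A B C, ider G (Or A B) -> ider (A :: G) C ->
                ider (B :: G) C -> ider G C
| ider_impI : forall G A B, ider (A :: G) B -> ider G (Imp A B)
| ider_impE : forall G A B, ider G (Imp A B) -> ider G A -> ider G B.

Fixpoint eval (v : nat -> bool) (A : form) : bool :=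
  match A with
  | Var p => v p
  | Bot => false
  | And B C => eval v B && eval v C
  | Or B C => eval v B || eval v C
  | Imp B C => implb (eval v B) (eval v C)
  end.

Definition cder (G S : list form) : Prop :=
  forall v : nat -> bool,
    (forall A, In A G -> eval v A = true) -> exists B, In B S /\ eval v B = true.

(* Main.v *)
Require Import Defs.
From Stdlib Require Import List.
Import ListNotations.
From Stdlib Require Import Bool Lia Arith.

Lemma incl_cc {T:Type} (a:T) l l' : incl l l' -> incl (a::l) (a::l').
Proof. intros H x [->|Hx]; [left; reflexivity | right; auto]. Qed.

Lemma weak G A : ider G A -> forall G', incl G G' -> ider G' A.
Proof.
  induction 1; intros G' Hi.
  - apply ider_ax; auto.
  - apply ider_botE; auto.
  - apply ider_andI; auto.
  - eapply ider_andE1; eauto.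
  - eapply ider_andE2; eauto.
  - apply ider_orI1; auto.
  - apply ider_orI2; auto.
  - eapply ider_orE; [apply IHider1; auto | apply IHider2; apply incl_cc; auto
                     | apply IHider3; apply incl_cc; auto].
  - apply ider_impI; apply IHider; apply incl_cc; auto.
  - eapply ider_impE; eauto.
Qed.

Lemma wk G A B : ider G A -> ider (B::G) A.
Proof. intros H; eapply weak; [exact H| apply incl_tl, incl_refl]. Qed.

Lemma ax0 G A : ider (A::G) A.
Proof. apply ider_ax; left; reflexivity. Qed.

Lemma cutl G B C : ider G B -> ider (B::G) C -> ider G C.
Proof. intros h1 h2. eapply ider_impE; [apply ider_impI; exact h2| exact h1]. Qed.

Definition OK V G Gam Del Sig :=
  (forall p, In p V -> ider G (Or (Var p) (Neg (Var p)))) /\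
  (forall A, In A Gam -> ider G A) /\
  (forall D, In D Del -> ider G (NegS (Neg D))) /\
  (forall S, In S Sig -> ider G (NegS S)).

Lemma OK_wk V G Gam Del Sig B : OK V G Gam Del Sig -> OK V (B::G) Gam Del Sig.
Proof. intros (H1&H2&H3&H4); repeat split; intros; apply wk; auto. Qed.

Lemma OK_change V G Gam Del Sig Gam' Del' Sig' : OK V G Gam Del Sig ->
  (forall A, In A Gam' -> In A Gam \/ ider G A) ->
  (forall D, In D Del' -> In D Del \/ ider G (NegS (Neg D))) ->
  (forall S, In S Sig' -> In S Sig \/ ider G (NegS S)) -> OK V G Gam' Del' Sig'.
Proof.
  intros (H1&H2&H3&H4) h2 h3 h4; repeat split; auto.
  - intros A HA; destruct (h2 A HA); auto.
  - intros A HA; destruct (h3 A HA); auto.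
  - intros A HA; destruct (h4 A HA); auto.
Qed.

Definition sem L R := forall v, forallb (eval v) L = true -> existsb (eval v) R = true.

Definition cond V Gam Del Sig := forall p,
  (In p (vnegL (Gam ++ Del)) \/ In p (vposL Sig)) ->
  (In p (vnspL Gam) \/ In p (vposL Del) \/ In p (vnegL Sig)) -> In p V.

Lemma cond_mono V G D S G' D' S' : cond V G D S ->
 (forall p, In p (vnegL (G' ++ D')) \/ In p (vposL S') -> In p (vnegL (G ++ D)) \/ In p (vposL S)) ->
 (forall p, In p (vnspL G') \/ In p (vposL D') \/ In p (vnegL S') -> In p (vnspL G) \/ In p (vposL D) \/ In p (vnegL S)) ->
 cond V G' D' S'.
Proof. intros H a b p h1 h2; apply H; auto. Qed.

Ltac condt := intros p; unfold vnegL, vposL, vnspL; rewrite ?flat_map_app; simpl;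
  rewrite ?flat_map_app, ?in_app_iff; simpl; rewrite ?in_app_iff; tauto.

Ltac semt := let v := fresh "v" in intros v;
  match goal with H: sem _ _ |- _ => specialize (H v); revert H end;
  rewrite ?forallb_app, ?existsb_app; simpl; rewrite ?forallb_app, ?existsb_app;
  repeat match goal with
  | |- context[forallb (eval v) ?l] => destruct (forallb (eval v) l)
  | |- context[existsb (eval v) ?l] => destruct (existsb (eval v) l)
  | |- context [eval v ?A] => destruct (eval v A)
  end; simpl; intuition (try discriminate).

Fixpoint fsz A := match A with Var _ | Bot => 1
  | And B C | Or B C | Imp B C => S (fsz B + fsz C) end.
Definition lsz L := fold_right (fun A n => fsz A + n) 0 L.
Lemma lsz_app l1 l2 : lsz (l1++l2) = lsz l1 + lsz l2.
Proof. induction l1; simpl; auto. rewrite IHl1; lia. Qed.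

Ltac szt := simpl; rewrite ?lsz_app in *; simpl in *; lia.

Definition isvar A := match A with Var _ => true | _ => false end.
Lemma split_nonvar L : (exists L1 X L2, L = L1 ++ X :: L2 /\ isvar X = false)
   \/ (forall X, In X L -> isvar X = true).
Proof. induction L as [|a L IH].
 - right; intros X [].
 - destruct (isvar a) eqn:E.
   + destruct IH as [(L1&X&L2&->&HX)|H].
     * left; exists (a::L1), X, L2; auto.
     * right; intros X [<-|HX]; auto.
   + left; exists [], a, L; auto.
Qed.

Ltac mem := let X := fresh "X" in let HX := fresh "HX" in
  intros X HX; simpl in HX; rewrite ?in_app_iff in HX; simpl; rewrite ?in_app_iff; simpl.

Lemma main V : forall n Gam Del Sig, lsz Gam + lsz Del + lsz Sig < n ->
  sem (Gam ++ Del) Sig -> cond V Gam Del Sig ->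
  forall G, OK V G Gam Del Sig -> ider G star.
Proof.
  induction n as [|n IH]; intros Gam Del Sig Hn Hs Hc G HOK; [lia|].
  destruct (split_nonvar Gam) as [(G1&X&G2&->&HX)|HG].
  { pose proof HOK as (H1&H2&H3&H4).
    destruct X as [p| |A B|A B|A B]; [discriminate| | | | ]; clear HX.
    - apply ider_botE, H2, in_elt.
    - apply (IH (A::B::G1++G2) Del Sig); [szt|semt|eapply cond_mono; [exact Hc|condt|condt]|].
      eapply OK_change; [exact HOK| |mem; tauto|mem; tauto].
      mem. destruct HX as [<-|[<-|HX]].
      + right; eapply ider_andE1; apply H2, in_elt.
      + right; eapply ider_andE2; apply H2, in_elt.
      + left; tauto.
    - eapply ider_orE; [apply H2, in_elt| |].
      + apply (IH (A::G1++G2) Del Sig); [szt|semt|eapply cond_mono; [exact Hc|condt|condt]|].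
        eapply OK_change; [apply OK_wk; exact HOK| |mem; tauto|mem; tauto].
        mem. destruct HX as [<-|HX]; [right; apply ax0| left; tauto].
      + apply (IH (B::G1++G2) Del Sig); [szt|semt|eapply cond_mono; [exact Hc|condt|condt]|].
        eapply OK_change; [apply OK_wk; exact HOK| |mem; tauto|mem; tauto].
        mem. destruct HX as [<-|HX]; [right; apply ax0| left; tauto].
    - assert (hNA : ider G (NegS A)).
      { apply ider_impI. apply (cutl _ B).
        - eapply ider_impE; [apply wk, H2, in_elt| apply ax0].
        - apply (IH (B::G1++G2) Del Sig); [szt|semt|eapply cond_mono; [exact Hc|condt|condt]|].
          eapply OK_change; [apply OK_wk, OK_wk; exact HOK| |mem; tauto|mem; tauto].
          mem. destruct HX as [<-|HX]; [right; apply ax0| left; tauto]. }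
      apply (IH (G1++G2) Del (A::Sig)); [szt|semt|eapply cond_mono; [exact Hc|condt|condt]|].
      eapply OK_change; [exact HOK| mem; tauto |mem; tauto|].
      mem. destruct HX as [<-|HX]; [right; exact hNA| left; tauto]. }
  destruct (split_nonvar Del) as [(D1&X&D2&->&HX)|HD].
  { pose proof HOK as (H1&H2&H3&H4).
    pose proof (H3 X (in_elt _ _ _)) as hX.
    destruct X as [p| |A B|A B|A B]; [discriminate| | | | ]; clear HX; unfold NegS, Neg in *.
    - eapply ider_impE; [exact hX| apply ider_impI, ax0].
    - apply (IH Gam (A::B::D1++D2) Sig); [szt|semt|eapply cond_mono; [exact Hc|condt|condt]|].
      eapply OK_change; [exact HOK|mem; tauto| |mem; tauto].
      mem. destruct HX as [<-|[<-|HX]]; [right|right|left; tauto].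
      all: unfold NegS, Neg; apply ider_impI; eapply ider_impE; [apply wk, hX| apply ider_impI].
      + eapply ider_impE; [apply wk, ax0|]. eapply ider_andE1; apply ax0.
      + eapply ider_impE; [apply wk, ax0|]. eapply ider_andE2; apply ax0.
    - assert (nnA : ider G (Imp (Imp A Bot) star)).
      { apply ider_impI.
        apply (IH Gam (B::D1++D2) Sig); [szt|semt|eapply cond_mono; [exact Hc|condt|condt]|].
        eapply OK_change; [apply OK_wk; exact HOK|mem; tauto| |mem; tauto].
        mem. destruct HX as [<-|HX]; [right|left; tauto]. unfold NegS, Neg.
        apply ider_impI; eapply ider_impE; [apply wk, wk, hX| apply ider_impI].
        eapply ider_orE; [apply ax0| |].
        + eapply ider_impE; [apply wk, wk, wk, ax0| apply ax0].
        + eapply ider_impE; [apply wk, wk, ax0| apply ax0]. }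
      apply (IH Gam (A::D1++D2) Sig); [szt|semt|eapply cond_mono; [exact Hc|condt|condt]|].
      eapply OK_change; [exact HOK|mem; tauto| |mem; tauto].
      mem. destruct HX as [<-|HX]; [right; exact nnA|left; tauto].
    - assert (nsA : ider G (Imp A star)).
      { apply ider_impI.
        apply (IH Gam (B::D1++D2) Sig); [szt|semt|eapply cond_mono; [exact Hc|condt|condt]|].
        eapply OK_change; [apply OK_wk; exact HOK|mem; tauto| |mem; tauto].
        mem. destruct HX as [<-|HX]; [right|left; tauto]. unfold NegS, Neg.
        apply ider_impI; eapply ider_impE; [apply wk, wk, hX| apply ider_impI].
        eapply ider_impE; [apply wk, ax0|].
        eapply ider_impE; [apply ax0| apply wk, wk, ax0]. }
      apply (IH Gam (D1++D2) (A::Sig)); [szt|semt|eapply cond_mono; [exact Hc|condt|condt]|].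
      eapply OK_change; [exact HOK|mem; tauto|mem; tauto| ].
      mem. destruct HX as [<-|HX]; [right; exact nsA|left; tauto]. }
  destruct (split_nonvar Sig) as [(S1&X&S2&->&HX)|HS].
  { pose proof HOK as (H1&H2&H3&H4).
    pose proof (H4 X (in_elt _ _ _)) as hX.
    destruct X as [p| |A B|A B|A B]; [discriminate| | | | ]; clear HX; unfold NegS, Neg in *.
    - apply (IH Gam Del (S1++S2)); [szt|semt|eapply cond_mono; [exact Hc|condt|condt]|].
      eapply OK_change; [exact HOK|mem; tauto|mem; tauto|mem; tauto].
    - assert (nsA : ider G (Imp A star)).
      { apply ider_impI.
        apply (IH Gam Del (B::S1++S2)); [szt|semt|eapply cond_mono; [exact Hc|condt|condt]|].
        eapply OK_change; [apply OK_wk; exact HOK|mem; tauto|mem; tauto| ].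
        mem. destruct HX as [<-|HX]; [right|left; tauto]. unfold NegS.
        apply ider_impI; eapply ider_impE; [apply wk, wk, hX|].
        apply ider_andI; [apply wk, ax0| apply ax0]. }
      apply (IH Gam Del (A::S1++S2)); [szt|semt|eapply cond_mono; [exact Hc|condt|condt]|].
      eapply OK_change; [exact HOK|mem; tauto|mem; tauto| ].
      mem. destruct HX as [<-|HX]; [right; exact nsA|left; tauto].
    - apply (IH Gam Del (A::B::S1++S2)); [szt|semt|eapply cond_mono; [exact Hc|condt|condt]|].
      eapply OK_change; [exact HOK|mem; tauto|mem; tauto| ].
      mem. destruct HX as [<-|[<-|HX]]; [right|right|left; tauto].
      all: unfold NegS; apply ider_impI; eapply ider_impE; [apply wk, hX|].
      + apply ider_orI1, ax0.
      + apply ider_orI2, ax0.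
    - apply (IH Gam (A::Del) (B::S1++S2)); [szt|semt|eapply cond_mono; [exact Hc|condt|condt]|].
      eapply OK_change; [exact HOK|mem; tauto| |].
      + mem. destruct HX as [<-|HX]; [right|left; tauto]. unfold NegS, Neg.
        apply ider_impI; eapply ider_impE; [apply wk, hX|].
        apply ider_impI. apply ider_botE. eapply ider_impE; [apply wk, ax0| apply ax0].
      + mem. destruct HX as [<-|HX]; [right|left; tauto]. unfold NegS.
        apply ider_impI; eapply ider_impE; [apply wk, hX|].
        apply ider_impI. apply wk, ax0. }
  pose proof HOK as (H1&H2&H3&H4).
  assert (Hv : forall X, In X (Gam ++ Del) -> exists q, X = Var q).
  { intros X HX. assert (isvar X = true) as E.
    { apply in_app_iff in HX; destruct HX; auto. }
    destruct X; try discriminate; eauto. }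
  set (v := fun p => if in_dec Nat.eq_dec p (flat_map vars (Gam ++ Del)) then true else false).
  assert (Ht : forallb (eval v) (Gam ++ Del) = true).
  { apply forallb_forall. intros X HX. destruct (Hv X HX) as [q ->]. simpl. unfold v.
    destruct (in_dec Nat.eq_dec q (flat_map vars (Gam ++ Del))) as [_|n0]; auto.
    exfalso; apply n0, in_flat_map. exists (Var q); simpl; auto. }
  specialize (Hs v Ht). apply existsb_exists in Hs. destruct Hs as (Y&HY&EY).
  assert (isvar Y = true) as E by auto. destruct Y as [r| | | |]; try discriminate.
  simpl in EY; unfold v in EY.
  destruct (in_dec Nat.eq_dec r (flat_map vars (Gam ++ Del))) as [Hr|]; [|discriminate].
  apply in_flat_map in Hr. destruct Hr as (C&HC&Hrc).
  destruct (Hv C HC) as [q ->]. simpl in Hrc. destruct Hrc as [<-|[]].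
  apply in_app_iff in HC. destruct HC as [HC|HC].
  - eapply ider_impE; [apply H4, HY| apply H2, HC].
  - assert (Hq : In q V).
    { apply Hc.
      + right. apply in_flat_map. exists (Var q); simpl; auto.
      + right; left. apply in_flat_map. exists (Var q); simpl; auto. }
    eapply ider_orE; [apply H1, Hq| |].
    + eapply ider_impE; [apply wk, H4, HY| apply ax0].
    + eapply ider_impE; [apply wk, H3, HC| apply ax0].
Qed.

Theorem proposition3 (Gamma Delta Sigma : list form) (V : list nat) :
  (forall A, In A (Gamma ++ Delta ++ Sigma) -> ~ In star_var (vars A)) ->
  cder (Gamma ++ Delta) Sigma ->
  (forall p,
      (In p (vnegL (Gamma ++ Delta)) \/ In p (vposL Sigma)) ->
      (In p (vnspL Gamma) \/ In p (vposL Delta) \/ In p (vnegL Sigma)) ->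
      In p V) ->
  ider (Pi V ++ Gamma ++ map (fun D => NegS (Neg D)) Delta ++ map NegS Sigma) star.
Proof.
  intros _ Hcd Hc.
  apply (main V (S (lsz Gamma + lsz Delta + lsz Sigma)) Gamma Delta Sigma); [lia| |exact Hc|].
  - intros v Hv. rewrite forallb_forall in Hv. destruct (Hcd v Hv) as (B&HB&HE).
    apply existsb_exists; eauto.
  - repeat split; intros; apply ider_ax; rewrite !in_app_iff.
    + left. unfold Pi. apply (in_map (fun p => Or (Var p) (Neg (Var p)))); auto.
    + right; left; auto.
    + right; right; left. apply (in_map (fun D => NegS (Neg D))); auto.
    + right; right; right. apply in_map; auto.
Qed.
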